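(* Let $a,b\in\mathbb{Z}^+$ with $a$ odd. For every $n\in\mathbb{Z}^+$, $$t(a,3a,4b;4n+6a)=2t(a,12a,b;n),\qquad t(a,3a,4b;4n+3a)=2t(3a,4a,b;n).$$ Moreover, for all complex $q$ with $|q|<1$, $$\sum_{n=0}^{\infty}t(a,3a,4b;4n)q^n=8\varphi(q^{6a})\psi(q^a)\psi(q^b),\qquad \sum_{n=0}^{\infty}t(a,3a,4b;4n+a)q^n=8\varphi(q^{2a})\psi(q^{3a})\psi(q^b).$$
   Context: $\mathbb{Z}^+$ is the set of positive integers. For $a,b,c\in\mathbb{Z}^+$ and nonnegative integer $n$, $t(a,b,c;n)$ denotes the number of triples $(x,y,z)\in\mathbb{Z}^3$ with $n=a\frac{x(x+1)}2+b\frac{y(y+1)}2+c\frac{z(z+1)}2$. Ramanujan's theta functions are $\varphi(q)=\sum_{n=-\infty}^{\infty}q^{n^2}$ and $\psi(q)=\sum_{n=0}^{\infty}q^{n(n+1)/2}$ for $|q|<1$. *)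

(* Defs.v *)
From Stdlib Require Import Reals ZArith List Lia.
From Coquelicot Require Import Coquelicot.
Import ListNotations.

(* Triangular number x(x+1)/2 for x : Z (exact division, x(x+1) is even). *)
Definition tri (x : Z) : Z := (x * (x + 1) / 2)%Z.

(* The integers -(N+1), ..., N.  If c >= 1 and c * tri x <= N then
   x lies in this range (tri x >= x for x >= 0, tri x >= -x-1 for x < 0),
   so every solution of n = a tri x + b tri y + c tri z (a,b,c >= 1) has all
   coordinates in box n. *)
Definition box (N : nat) : list Z :=
  map (fun k => (Z.of_nat k - (Z.of_nat N + 1))%Z) (seq 0 (2 * N + 2)).

(* t(a,b,c;n) = #{(x,y,z) in Z^3 | n = a x(x+1)/2 + b y(y+1)/2 + c z(z+1)/2 },
   for a, b, c positive (the count is over the finite box containing all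
   solutions, see above). *)
Definition t (a b c n : nat) : nat :=
  length (filter
    (fun p : Z * Z * Z =>
       let '(x, y, z) := p in
       Z.eqb (Z.of_nat n)
             (Z.of_nat a * tri x + Z.of_nat b * tri y + Z.of_nat c * tri z))
    (list_prod (list_prod (box n) (box n)) (box n))).

(* Sum of a complex series, computed via the real and imaginary parts
   (Coquelicot's Series is real-valued).  For a convergent series this is
   its sum. *)
Definition CSeries (u : nat -> C) : C :=
  (Series (fun k => Re (u k)), Series (fun k => Im (u k))).

(* Ramanujan's phi(q) = sum_{n in Z} q^{n^2}, split as the terms with
   n = k >= 0 plus the terms with n = -(k+1) < 0. *)
Definition ramanujan_phi (q : C) : C :=
  (CSeries (fun k => Cpow q (k * k)) +
   CSeries (fun k => Cpow q ((k + 1) * (k + 1))))%C.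

Definition ramanujan_psi (q : C) : C :=
  CSeries (fun n => Cpow q (n * (n + 1) / 2)).

(* Main.v *)
Require Import Defs.
From Stdlib Require Import Reals ZArith Arith Lia Lra List Permutation.
From Coquelicot Require Import Coquelicot.
Import ListNotations.

Definition is_count {A : Type} (P : A -> Prop) (m : nat) : Prop :=
  exists l : list A, NoDup l /\ (forall x, In x l <-> P x) /\ length l = m.

Lemma is_count_unique {A} (P : A -> Prop) m1 m2 :
  is_count P m1 -> is_count P m2 -> m1 = m2.
Proof.
  intros [l1 [N1 [I1 L1]]] [l2 [N2 [I2 L2]]]. subst.
  apply Permutation_length. apply NoDup_Permutation; auto.
  intro x. rewrite I1, I2. tauto.
Qed.

Lemma is_count_ext {A} (P Q : A -> Prop) m :
  (forall x, P x <-> Q x) -> is_count P m -> is_count Q m.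
Proof.
  intros H [l [N [I L]]]. exists l. split; [auto|split; [|auto]].
  intro x. rewrite I. apply H.
Qed.

Lemma is_count_filter {A} (P : A -> Prop) (f : A -> bool) (l : list A) :
  NoDup l -> (forall x, P x -> In x l) -> (forall x, f x = true <-> P x) ->
  is_count P (length (filter f l)).
Proof.
  intros N H F. exists (filter f l). split; [apply NoDup_filter; auto|split; auto].
  intro x. rewrite filter_In. rewrite F. split; [tauto| intro; split; auto].
Qed.

Lemma is_count_bij {A B} (P : A -> Prop) (Q : B -> Prop) (g : B -> A) m :
  is_count Q m -> (forall y, Q y -> P (g y)) ->
  (forall y1 y2, Q y1 -> Q y2 -> g y1 = g y2 -> y1 = y2) ->
  (forall x, P x -> exists y, Q y /\ x = g y) -> is_count P m.
Proof.
  intros [l [N [I L]]] HQ Hinj Hsurj. exists (map g l). split.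
  - assert (HH : forall y, In y l -> Q y) by (intros; apply I; auto). clear I L.
    induction N as [|y l Hy N IH]; simpl; constructor.
    + intro Hin. apply in_map_iff in Hin. destruct Hin as [y' [E Hy']]. apply Hy.
      rewrite (Hinj y' y) in Hy'; auto; apply HH; simpl; auto.
    + apply IH. intros; apply HH; simpl; auto.
  - split; [|rewrite length_map; auto].
    intro x; rewrite in_map_iff; split.
    + intros [y [E Hy]]; subst; apply HQ, I; auto.
    + intros Hx; destruct (Hsurj x Hx) as [y [Qy E]]; exists y; split; auto; apply I; auto.
Qed.

Lemma is_count_union {A} (P Q : A -> Prop) m1 m2 :
  is_count P m1 -> is_count Q m2 -> (forall x, P x -> Q x -> False) ->
  is_count (fun x => P x \/ Q x) (m1 + m2).
Proof.
  intros [l1 [N1 [I1 L1]]] [l2 [N2 [I2 L2]]] D. exists (l1 ++ l2). split.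
  - apply NoDup_app; auto. intros x H1 H2. apply (D x); [apply I1|apply I2]; auto.
  - split; [|rewrite length_app; subst; auto].
    intro x. rewrite in_app_iff, I1, I2. tauto.
Qed.

Lemma is_count_empty {A} (P : A -> Prop) : (forall x, ~ P x) -> is_count P 0.
Proof. intros H. exists []. simpl. split; [constructor|split; auto]. intro x. split; [tauto|intro Hx; apply (H x Hx)]. Qed.

Lemma is_count_single {A} (P : A -> Prop) a : (forall x, P x <-> x = a) -> is_count P 1.
Proof.
  intros H. exists [a]. split; [constructor; [simpl; tauto|constructor]|split; auto].
  intro x. rewrite H. simpl. split; [intros [E|[]]; auto| intros; left; auto].
Qed.

Lemma NoDup_prod {A B} (l1 : list A) (l2 : list B) :
  NoDup l1 -> NoDup l2 -> NoDup (list_prod l1 l2).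
Proof.
  intros N1 N2. induction N1 as [|x l1 Hx N1 IH]; simpl; [constructor|].
  apply NoDup_app; auto.
  - apply (NoDup_map_NoDup_ForallPairs); auto.
    intros u v _ _ E. injection E; auto.
  - intros p H1 H2. apply in_map_iff in H1. destruct H1 as [y [E _]]. subst.
    apply in_prod_iff in H2. destruct H2; auto.
Qed.

Lemma is_count_prod {A B} (P : A -> Prop) (Q : B -> Prop) m1 m2 :
  is_count P m1 -> is_count Q m2 ->
  is_count (fun p => P (fst p) /\ Q (snd p)) (m1 * m2).
Proof.
  intros [l1 [N1 [I1 L1]]] [l2 [N2 [I2 L2]]]. exists (list_prod l1 l2). split.
  - apply NoDup_prod; auto.
  - split; [|rewrite length_prod; subst; auto].
    intros [x y]. rewrite in_prod_iff, I1, I2. simpl. tauto.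
Qed.

Fixpoint sumk (f : nat -> nat) (k : nat) : nat :=
  match k with O => f O | S k' => (sumk f k' + f (S k'))%nat end.
Definition natconv (c d : nat -> nat) (n : nat) : nat :=
  sumk (fun i => (c i * d (n - i))%nat) n.

Lemma is_count_conv {A B} (h1 : A -> Z) (h2 : B -> Z) (c d : nat -> nat) n :
  (forall x, (0 <= h1 x)%Z) -> (forall y, (0 <= h2 y)%Z) ->
  (forall i, is_count (fun x => h1 x = Z.of_nat i) (c i)) ->
  (forall i, is_count (fun y => h2 y = Z.of_nat i) (d i)) ->
  is_count (fun p => (h1 (fst p) + h2 (snd p))%Z = Z.of_nat n) (natconv c d n).
Proof.
  intros H1 H2 Hc Hd.
  assert (K : forall k, (k <= n)%nat -> is_count (fun p => (h1 (fst p) + h2 (snd p))%Z = Z.of_nat n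
             /\ (h1 (fst p) <= Z.of_nat k)%Z) (sumk (fun i => (c i * d (n - i))%nat) k)).
  { induction k as [|k IH]; intros Hk; simpl.
    - eapply is_count_ext; [|apply is_count_prod; [apply (Hc 0%nat)|apply (Hd (n-0)%nat)]].
      intros p. simpl. rewrite Nat.sub_0_r. specialize (H1 (fst p)); specialize (H2 (snd p)). lia.
    - eapply is_count_ext; [|apply is_count_union; [apply IH; lia|
         apply is_count_prod; [apply (Hc (S k))|apply (Hd (n - S k)%nat)]|]].
      + intros p. simpl. rewrite Nat2Z.inj_sub by lia.
        specialize (H1 (fst p)); specialize (H2 (snd p)). lia.
      + intros p. simpl. rewrite Nat2Z.inj_sub by lia. lia. }
  eapply is_count_ext; [|apply (K n); lia].
  intros p. simpl. specialize (H1 (fst p)); specialize (H2 (snd p)). lia.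
Qed.

Open Scope Z_scope.

Lemma tri_spec x : 2 * tri x = x * (x + 1).
Proof.
  unfold tri. destruct (Z.Even_or_Odd x) as [[k Hk]|[k Hk]]; subst.
  - replace (2*k*(2*k+1)) with ((k*(2*k+1))*2) by ring. rewrite Z.div_mul by lia. ring.
  - replace ((2*k+1)*(2*k+1+1)) with (((2*k+1)*(k+1))*2) by ring. rewrite Z.div_mul by lia. ring.
Qed.

Lemma tri_bounds x : 0 <= tri x /\ x <= tri x /\ -x-1 <= tri x.
Proof. pose proof (tri_spec x). destruct (Z_le_gt_dec 0 x); nia. Qed.

Lemma tri_neg x : tri (-x-1) = tri x.
Proof. pose proof (tri_spec x). pose proof (tri_spec (-x-1)). nia. Qed.

Lemma tri_shift y k : tri (y + 2*k) = tri y + 2*k*y + 2*k*k + k.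
Proof. pose proof (tri_spec y). pose proof (tri_spec (y+2*k)). nia. Qed.

Lemma in_box N x : In x (box N) <-> -(Z.of_nat N + 1) <= x <= Z.of_nat N.
Proof.
  unfold box. rewrite in_map_iff. split.
  - intros [k [E Hk]]. apply in_seq in Hk. lia.
  - intros H. exists (Z.to_nat (x + Z.of_nat N + 1)). split; [lia|]. apply in_seq. lia.
Qed.

Lemma box_NoDup N : NoDup (box N).
Proof.
  unfold box. apply NoDup_map_NoDup_ForallPairs; [|apply seq_NoDup].
  intros u v _ _ E. lia.
Qed.

Definition solP (A B C n : nat) (p : Z * Z * Z) : Prop :=
  Z.of_nat n = Z.of_nat A * tri (fst (fst p)) + Z.of_nat B * tri (snd (fst p)) + Z.of_nat C * tri (snd p).

Lemma t_count A B C n : (0 < A)%nat -> (0 < B)%nat -> (0 < C)%nat ->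
  is_count (solP A B C n) (t A B C n).
Proof.
  intros HA HB HC. unfold t. apply is_count_filter.
  - apply NoDup_prod; [apply NoDup_prod|]; apply box_NoDup.
  - intros [[x y] z]. unfold solP; simpl. intros H.
    destruct (tri_bounds x) as [? [? ?]]. destruct (tri_bounds y) as [? [? ?]].
    destruct (tri_bounds z) as [? [? ?]].
    assert (tri x <= Z.of_nat n) by nia. assert (tri y <= Z.of_nat n) by nia.
    assert (tri z <= Z.of_nat n) by nia.
    apply in_prod_iff; split; [apply in_prod_iff; split|]; apply in_box; lia.
  - intros [[x y] z]. unfold solP; simpl. rewrite Z.eqb_eq. tauto.
Qed.

Lemma mod4_lemma (a c F M N r : Z) : a = 2*c+1 -> a*F + 4*M = 4*N + r*a ->
  exists K, F = 4*K + r.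
Proof.
  intros Ha E. pose proof (tri_spec c) as Tc.
  assert (Ha2 : a*a = 8*tri c + 1) by (subst; nia).
  exists (a*N - a*M - 2*tri c*F + 2*tri c*r).
  assert (E2 : a*(4*N - 4*M) = a*(a*F - r*a)) by (f_equal; lia).
  assert (E3 : a*a*F = 8*tri c*F + F) by (rewrite Ha2; ring).
  assert (E4 : a*a*r = 8*tri c*r + r) by (rewrite Ha2; ring).
  nia.
Qed.

Ltac prod_eq := repeat (apply injective_projections; cbn [fst snd]); try lia.

Lemma half_count (P : Z*Z*Z -> Prop) m :
  (forall x y z, P (x,y,z) -> P (x,-y-1,z)) ->
  is_count (fun p => P p /\ exists k, fst (fst p) - snd (fst p) = 2*k) m ->
  is_count P (2*m).
Proof.
  intros Hs Hc. replace (2*m)%nat with (m+m)%nat by lia.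
  eapply is_count_ext; [|apply is_count_union; [apply Hc|
    apply (is_count_bij (fun p => P p /\ exists k, fst (fst p) - snd (fst p) = 2*k+1) _
       (fun p => (fst (fst p), - snd (fst p) - 1, snd p)) m Hc)|]].
  - intros [[x y] z]; cbn [fst snd]. split.
    + intros [[H _]|[H _]]; auto.
    + intros H. destruct (Z.Even_or_Odd (x - y)) as [[k Hk]|[k Hk]]; [left|right]; split; eauto.
  - intros [[x y] z] [H [k Hk]]; cbn [fst snd] in *. split; [auto|]. exists (k + y). lia.
  - intros [[x1 y1] z1] [[x2 y2] z2] _ _ E. cbn [fst snd] in E. injection E; intros.
    prod_eq.
  - intros [[x y] z] [H [k Hk]]; cbn [fst snd] in *. exists (x, -y-1, z). cbn [fst snd]. split.
    + split; [auto|]. exists (k+y+1). lia.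
    + prod_eq.
  - intros [[x y] z] [_ [k1 H1]] [_ [k2 H2]]. cbn [fst snd] in *. lia.
Qed.



Lemma odd_Z a : Nat.odd a = true -> exists c, Z.of_nat a = 2*c+1.
Proof. intros H. apply Nat.odd_spec in H. destruct H as [k Hk]. exists (Z.of_nat k). lia. Qed.

Lemma identC x y : tri (x+6*y+3) + 3*tri (x-2*y-1) = 4*tri x + 48*tri y + 6.
Proof. pose proof (tri_spec x); pose proof (tri_spec y); pose proof (tri_spec (x+6*y+3));
  pose proof (tri_spec (x-2*y-1)); lia. Qed.
Lemma identD x y : tri (3*x+2*y+2) + 3*tri (2*y-x) = 12*tri x + 16*tri y + 3.
Proof. pose proof (tri_spec x); pose proof (tri_spec y); pose proof (tri_spec (3*x+2*y+2));
  pose proof (tri_spec (2*y-x)); lia. Qed.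
Lemma identA s w : tri (w+6*s) + 3*tri (w-2*s) = 4*tri w + 24*(s*s).
Proof. pose proof (tri_spec w); pose proof (tri_spec (w+6*s));
  pose proof (tri_spec (w-2*s)); lia. Qed.
Lemma identB s w : tri (2*s+3*w+1) + 3*tri (2*s-w-1) = 8*(s*s) + 12*tri w + 1.
Proof. pose proof (tri_spec w); pose proof (tri_spec (2*s+3*w+1));
  pose proof (tri_spec (2*s-w-1)); lia. Qed.

Lemma triple_inj (x1 y1 z1 x2 y2 z2 : Z) : (x1,y1,z1) = (x2,y2,z2) -> x1 = x2 /\ y1 = y2 /\ z1 = z2.
Proof. intros H; inversion H; auto. Qed.

Lemma sym_sol A B C N x y z : solP A B C N (x,y,z) -> solP A B C N (x,-y-1,z).
Proof. unfold solP; cbn [fst snd]. rewrite tri_neg. auto. Qed.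

Lemma caseC a b n : (0 < a)%nat -> (0 < b)%nat -> Nat.odd a = true ->
  t a (3*a) (4*b) (4*n+6*a) = (2 * t a (12*a) b n)%nat.
Proof.
  intros Ha Hb Ho. destruct (odd_Z a Ho) as [c Hc].
  apply (is_count_unique (solP a (3*a) (4*b) (4*n+6*a))); [apply t_count; lia|].
  apply half_count; [apply sym_sol|].
  apply (is_count_bij _ _ (fun p => (fst (fst p) + 6 * snd (fst p) + 3, fst (fst p) - 2 * snd (fst p) - 1, snd p))
    _ (t_count a (12*a) b n ltac:(lia) ltac:(lia) ltac:(lia))).
  - intros [[x y] z]. unfold solP. cbn [fst snd]. intros H. split.
    + pose proof (identC x y) as I.
      assert (I2 : Z.of_nat a * (tri (x+6*y+3) + 3*tri (x-2*y-1)) = Z.of_nat a * (4*tri x + 48*tri y + 6))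
        by (rewrite I; ring).
      lia.
    + exists (4*y+2). lia.
  - intros [[x1 y1] z1] [[x2 y2] z2] _ _ E. cbn [fst snd] in E; apply triple_inj in E; prod_eq.
  - intros [[x y] z] [HP [k Hk]]. unfold solP in HP; cbn [fst snd] in *.
    destruct (mod4_lemma (Z.of_nat a) c (tri x + 3*tri y) (Z.of_nat b * tri z) (Z.of_nat n) 6 Hc ltac:(lia))
      as [K HK].
    assert (Tx : tri x = tri y + 2*k*y + 2*k*k + k) by (replace x with (y+2*k) by lia; apply tri_shift).
    destruct (Z.Even_or_Odd k) as [[s Hs]|[s Hs]]; [|subst k; lia].
    destruct (Z.Even_or_Odd s) as [[s' Hs']|[s' Hs']]; [subst k s; lia|].
    exists (y + 2*s' + 1, s', z). cbn [fst snd]. split; [|prod_eq].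
    unfold solP; cbn [fst snd].
    pose proof (identC (y + 2*s' + 1) s') as I.
    replace (y + 2 * s' + 1 + 6 * s' + 3) with x in I by lia.
    replace (y + 2 * s' + 1 - 2 * s' - 1) with y in I by lia.
    assert (I2 : Z.of_nat a * (tri x + 3*tri y) = Z.of_nat a * (4*tri (y + 2*s' + 1) + 48*tri s' + 6))
        by (rewrite I; ring).
    lia.
Qed.

Lemma caseD a b n : (0 < a)%nat -> (0 < b)%nat -> Nat.odd a = true ->
  t a (3*a) (4*b) (4*n+3*a) = (2 * t (3*a) (4*a) b n)%nat.
Proof.
  intros Ha Hb Ho. destruct (odd_Z a Ho) as [c Hc].
  apply (is_count_unique (solP a (3*a) (4*b) (4*n+3*a))); [apply t_count; lia|].
  apply half_count; [apply sym_sol|].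
  apply (is_count_bij _ _ (fun p => (3 * fst (fst p) + 2 * snd (fst p) + 2, 2 * snd (fst p) - fst (fst p), snd p))
    _ (t_count (3*a) (4*a) b n ltac:(lia) ltac:(lia) ltac:(lia))).
  - intros [[x y] z]. unfold solP. cbn [fst snd]. intros H. split.
    + pose proof (identD x y) as I.
      assert (I2 : Z.of_nat a * (tri (3*x+2*y+2) + 3*tri (2*y-x)) = Z.of_nat a * (12*tri x + 16*tri y + 3))
        by (rewrite I; ring).
      lia.
    + exists (2*x+1). lia.
  - intros [[x1 y1] z1] [[x2 y2] z2] _ _ E. cbn [fst snd] in E; apply triple_inj in E; prod_eq.
  - intros [[x y] z] [HP [k Hk]]. unfold solP in HP; cbn [fst snd] in *.
    destruct (mod4_lemma (Z.of_nat a) c (tri x + 3*tri y) (Z.of_nat b * tri z) (Z.of_nat n) 3 Hc ltac:(lia))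
      as [K HK].
    assert (Tx : tri x = tri y + 2*k*y + 2*k*k + k) by (replace x with (y+2*k) by lia; apply tri_shift).
    destruct (Z.Even_or_Odd k) as [[s Hs]|[s Hs]]; [subst k; lia|].
    destruct (Z.Even_or_Odd (y+s)) as [[m Hm]|[m Hm]]; [|subst k; lia].
    exists (s, m, z). cbn [fst snd]. split; [|prod_eq].
    unfold solP; cbn [fst snd].
    pose proof (identD s m) as I.
    replace (3*s+2*m+2) with x in I by lia.
    replace (2*m-s) with y in I by lia.
    assert (I2 : Z.of_nat a * (tri x + 3*tri y) = Z.of_nat a * (12*tri s + 16*tri m + 3))
        by (rewrite I; ring).
    lia.
Qed.

Definition hsq (k : nat) (s : Z) : Z := Z.of_nat k * (s*s).
Definition htr (k : nat) (w : Z) : Z := Z.of_nat k * tri w.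
Definition QP (k1 k2 b n : nat) (p : Z*Z*Z) : Prop :=
  (hsq k1 (fst (fst p)) + htr k2 (snd (fst p))) + htr b (snd p) = Z.of_nat n.

Lemma caseA a b n m : (0 < a)%nat -> (0 < b)%nat -> Nat.odd a = true ->
  is_count (QP (6*a) a b n) m ->
  t a (3*a) (4*b) (4*n) = (2 * m)%nat.
Proof.
  intros Ha Hb Ho Hm. destruct (odd_Z a Ho) as [c Hc].
  apply (is_count_unique (solP a (3*a) (4*b) (4*n))); [apply t_count; lia|].
  apply half_count; [apply sym_sol|].
  apply (is_count_bij _ _ (fun p => (snd (fst p) + 6 * fst (fst p), snd (fst p) - 2 * fst (fst p), snd p))
    _ Hm).
  - intros [[s w] z]. unfold solP, QP, hsq, htr. cbn [fst snd]. intros H. split.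
    + pose proof (identA s w) as I.
      assert (I2 : Z.of_nat a * (tri (w+6*s) + 3*tri (w-2*s)) = Z.of_nat a * (4*tri w + 24*(s*s)))
        by (rewrite I; ring).
      lia.
    + exists (4*s). lia.
  - intros [[x1 y1] z1] [[x2 y2] z2] _ _ E. cbn [fst snd] in E; apply triple_inj in E; prod_eq.
  - intros [[x y] z] [HP [k Hk]]. unfold solP in HP; cbn [fst snd] in *.
    destruct (mod4_lemma (Z.of_nat a) c (tri x + 3*tri y) (Z.of_nat b * tri z) (Z.of_nat n) 0 Hc ltac:(lia))
      as [K HK].
    assert (Tx : tri x = tri y + 2*k*y + 2*k*k + k) by (replace x with (y+2*k) by lia; apply tri_shift).
    destruct (Z.Even_or_Odd k) as [[r Hr]|[r Hr]]; [|subst k; lia].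
    destruct (Z.Even_or_Odd r) as [[s Hs]|[s Hs]]; [|subst k r; lia].
    exists (s, y + 2*s, z). cbn [fst snd]. split; [|prod_eq].
    unfold QP, hsq, htr; cbn [fst snd].
    pose proof (identA s (y + 2*s)) as I.
    replace (y + 2*s + 6*s) with x in I by lia.
    replace (y + 2*s - 2*s) with y in I by lia.
    assert (I2 : Z.of_nat a * (tri x + 3*tri y) = Z.of_nat a * (4*tri (y+2*s) + 24*(s*s)))
        by (rewrite I; ring).
    lia.
Qed.

Lemma caseB a b n m : (0 < a)%nat -> (0 < b)%nat -> Nat.odd a = true ->
  is_count (QP (2*a) (3*a) b n) m ->
  t a (3*a) (4*b) (4*n+a) = (2 * m)%nat.
Proof.
  intros Ha Hb Ho Hm. destruct (odd_Z a Ho) as [c Hc].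
  apply (is_count_unique (solP a (3*a) (4*b) (4*n+a))); [apply t_count; lia|].
  apply half_count; [apply sym_sol|].
  apply (is_count_bij _ _ (fun p => (2 * fst (fst p) + 3 * snd (fst p) + 1, 2 * fst (fst p) - snd (fst p) - 1, snd p))
    _ Hm).
  - intros [[s w] z]. unfold solP, QP, hsq, htr. cbn [fst snd]. intros H. split.
    + pose proof (identB s w) as I.
      assert (I2 : Z.of_nat a * (tri (2*s+3*w+1) + 3*tri (2*s-w-1)) = Z.of_nat a * (8*(s*s) + 12*tri w + 1))
        by (rewrite I; ring).
      lia.
    + exists (2*w+1). lia.
  - intros [[x1 y1] z1] [[x2 y2] z2] _ _ E. cbn [fst snd] in E; apply triple_inj in E; prod_eq.
  - intros [[x y] z] [HP [k Hk]]. unfold solP in HP; cbn [fst snd] in *.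
    destruct (mod4_lemma (Z.of_nat a) c (tri x + 3*tri y) (Z.of_nat b * tri z) (Z.of_nat n) 1 Hc ltac:(lia))
      as [K HK].
    assert (Tx : tri x = tri y + 2*k*y + 2*k*k + k) by (replace x with (y+2*k) by lia; apply tri_shift).
    destruct (Z.Even_or_Odd k) as [[w Hw]|[w Hw]]; [subst k; lia|].
    destruct (Z.Even_or_Odd (y+w)) as [[m' Hm']|[m' Hm']]; [subst k; lia|].
    exists (m'+1, w, z). cbn [fst snd]. split; [|prod_eq].
    unfold QP, hsq, htr; cbn [fst snd].
    pose proof (identB (m'+1) w) as I.
    replace (2*(m'+1)+3*w+1) with x in I by lia.
    replace (2*(m'+1)-w-1) with y in I by lia.
    assert (I2 : Z.of_nat a * (tri x + 3*tri y) = Z.of_nat a * (8*((m'+1)*(m'+1)) + 12*tri w + 1))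
        by (rewrite I; ring).
    lia.
Qed.

Close Scope Z_scope.

Definition SM (E : nat -> nat) : Prop := forall k, (E k < E (S k))%nat.

Lemma SM_lt E : SM E -> forall i j, (i < j)%nat -> (E i < E j)%nat.
Proof.
  intros H i j Hij. induction j as [|j IH]; [lia|].
  destruct (Nat.eq_dec i j) as [->|Hne]; [apply H|]. specialize (H j). specialize (IH ltac:(lia)). lia.
Qed.

Lemma SM_ge E : SM E -> forall k, (k <= E k)%nat.
Proof. intros H k. induction k as [|k IH]; [lia|]. specialize (H k). lia. Qed.

Lemma SM_inj E : SM E -> forall i j, E i = E j -> i = j.
Proof.
  intros H i j Hij. destruct (Nat.lt_trichotomy i j) as [h|[h|h]]; auto;
  apply (SM_lt E H) in h; lia.
Qed.

Definition ind (E : nat -> nat) (n : nat) : nat :=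
  if existsb (fun k => Nat.eqb (E k) n) (seq 0 (S n)) then 1%nat else 0%nat.

Lemma ind_spec E n : SM E ->
  (ind E n = 1%nat /\ exists k, E k = n) \/ (ind E n = 0%nat /\ forall k, E k <> n).
Proof.
  intros H. unfold ind. destruct (existsb _ _) eqn:Eb.
  - left. split; auto. apply existsb_exists in Eb. destruct Eb as [k [_ Hk]].
    apply Nat.eqb_eq in Hk. eauto.
  - right. split; auto. intros k Hk.
    assert (HH : existsb (fun k => Nat.eqb (E k) n) (seq 0 (S n)) = true).
    { apply existsb_exists. exists k. split; [apply in_seq; pose proof (SM_ge E H k); lia|].
      apply Nat.eqb_eq; auto. }
    congruence.
Qed.

Lemma count_ind (emb : nat -> Z) (E : nat -> nat) (P : Z -> Prop) n :
  SM E -> (forall i j, emb i = emb j -> i = j) ->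
  (forall w, P w <-> exists k, w = emb k /\ E k = n) -> is_count P (ind E n).
Proof.
  intros HE Hemb HP. destruct (ind_spec E n HE) as [[-> [k Hk]]|[-> Hk]].
  - apply (is_count_single _ (emb k)). intros w. rewrite HP. split.
    + intros [k' [-> Hk']]. f_equal. apply (SM_inj E HE). congruence.
    + intros ->. eauto.
  - apply is_count_empty. intros w Hw. apply HP in Hw. destruct Hw as [k' [_ Hk']]. apply (Hk k' Hk').
Qed.

Definition Esq (m k : nat) : nat := (m * (k * k))%nat.
Definition Esq1 (m k : nat) : nat := (m * ((k+1) * (k+1)))%nat.
Definition Etr (m k : nat) : nat := (m * (k * (k+1) / 2))%nat.

Lemma SM_Esq m : (0 < m)%nat -> SM (Esq m).
Proof. intros H k. unfold Esq. nia. Qed.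
Lemma SM_Esq1 m : (0 < m)%nat -> SM (Esq1 m).
Proof. intros H k. unfold Esq1. nia. Qed.

Lemma tri_nat_step k : ((S k) * (S k + 1) / 2 = k * (k+1) / 2 + S k)%nat.
Proof.
  replace (S k * (S k + 1))%nat with (k * (k+1) + S k * 2)%nat by ring.
  apply Nat.div_add. lia.
Qed.

Lemma SM_Etr m : (0 < m)%nat -> SM (Etr m).
Proof. intros H k. unfold Etr. rewrite tri_nat_step. nia. Qed.

Lemma tri_nat k : tri (Z.of_nat k) = Z.of_nat (k * (k+1) / 2).
Proof. unfold tri. rewrite Nat2Z.inj_div, Nat2Z.inj_mul, Nat2Z.inj_add. reflexivity. Qed.

Open Scope Z_scope.

Lemma count_hsq m i : (0 < m)%nat ->
  is_count (fun s => hsq m s = Z.of_nat i) (ind (Esq m) i + ind (Esq1 m) i).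
Proof.
  intros Hm.
  eapply is_count_ext; [|apply is_count_union;
     [apply (count_ind (fun k => Z.of_nat k) (Esq m) (fun s => 0 <= s /\ hsq m s = Z.of_nat i))
     |apply (count_ind (fun k => - Z.of_nat k - 1) (Esq1 m) (fun s => s < 0 /\ hsq m s = Z.of_nat i))|]].
  - intros s. simpl. lia.
  - apply SM_Esq; auto.
  - intros; lia.
  - intros s. unfold hsq, Esq. split.
    + intros [H1 H2]. exists (Z.to_nat s). split; [lia|]. apply Nat2Z.inj.
      rewrite Nat2Z.inj_mul, Nat2Z.inj_mul, Z2Nat.id by lia. lia.
    + intros [k [-> Hk]]. split; [lia|]. rewrite <- Hk. rewrite Nat2Z.inj_mul, Nat2Z.inj_mul. lia.
  - apply SM_Esq1; auto.
  - intros; lia.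
  - intros s. unfold hsq, Esq1. split.
    + intros [H1 H2]. exists (Z.to_nat (-s-1)). split; [lia|]. apply Nat2Z.inj.
      rewrite Nat2Z.inj_mul, Nat2Z.inj_mul, Nat2Z.inj_add, Z2Nat.id by lia. rewrite <- H2. simpl. ring.
    + intros [k [-> Hk]]. split; [lia|]. rewrite <- Hk. rewrite Nat2Z.inj_mul, Nat2Z.inj_mul, Nat2Z.inj_add.
      simpl. ring.
  - simpl. intros s [H1 _] [H2 _]. lia.
Qed.

Lemma count_htr m i : (0 < m)%nat ->
  is_count (fun w => htr m w = Z.of_nat i) (ind (Etr m) i + ind (Etr m) i).
Proof.
  intros Hm.
  eapply is_count_ext; [|apply is_count_union;
     [apply (count_ind (fun k => Z.of_nat k) (Etr m) (fun s => 0 <= s /\ htr m s = Z.of_nat i))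
     |apply (count_ind (fun k => - Z.of_nat k - 1) (Etr m) (fun s => s < 0 /\ htr m s = Z.of_nat i))|]].
  - intros s. simpl. lia.
  - apply SM_Etr; auto.
  - intros; lia.
  - intros s. unfold htr, Etr. split.
    + intros [H1 H2]. exists (Z.to_nat s). split; [lia|]. apply Nat2Z.inj.
      rewrite Nat2Z.inj_mul, <- tri_nat, Z2Nat.id by lia. lia.
    + intros [k [-> Hk]]. split; [lia|]. rewrite <- Hk. rewrite Nat2Z.inj_mul, <- tri_nat. lia.
  - apply SM_Etr; auto.
  - intros; lia.
  - intros s. unfold htr, Etr. split.
    + intros [H1 H2]. exists (Z.to_nat (-s-1)). split; [lia|]. apply Nat2Z.inj.
      rewrite Nat2Z.inj_mul, <- tri_nat, Z2Nat.id by lia. rewrite <- H2. f_equal.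
      rewrite <- (tri_neg s). f_equal. 
    + intros [k [-> Hk]]. split; [lia|]. rewrite <- Hk. rewrite Nat2Z.inj_mul, <- tri_nat, tri_neg. lia.
  - simpl. intros s [H1 _] [H2 _]. lia.
Qed.

Lemma count_QP k1 k2 b n : (0 < k1)%nat -> (0 < k2)%nat -> (0 < b)%nat ->
  is_count (QP k1 k2 b n)
    (natconv (natconv (fun i => ind (Esq k1) i + ind (Esq1 k1) i)%nat
                      (fun i => ind (Etr k2) i + ind (Etr k2) i)%nat)
             (fun i => ind (Etr b) i + ind (Etr b) i)%nat n).
Proof.
  intros H1 H2 H3. unfold QP.
  apply (is_count_conv (fun p => hsq k1 (fst p) + htr k2 (snd p)) (htr b)).
  - intros [s w]. simpl. unfold hsq, htr. pose proof (tri_bounds w). nia.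
  - intros w. unfold htr. pose proof (tri_bounds w). nia.
  - intros i. apply is_count_conv.
    + intros s. unfold hsq. nia.
    + intros w. unfold htr. pose proof (tri_bounds w). nia.
    + intros; apply count_hsq; auto.
    + intros; apply count_htr; auto.
  - intros; apply count_htr; auto.
Qed.

Close Scope Z_scope.
Open Scope R_scope.

Lemma im_le_Cmod c : Rabs (Im c) <= Cmod c.
Proof.
  pose proof (Cmod2_alt c). pose proof (Cmod_ge_0 c).
  unfold Rabs; destruct (Rcase_abs (Im c)); nra.
Qed.

Lemma is_series_plusR (a b : nat -> R) la lb :
  is_series a la -> is_series b lb -> is_series (fun n => a n + b n) (la + lb).
Proof. intros. exact (is_series_plus a b la lb H H0). Qed.
Lemma is_series_minusR (a b : nat -> R) la lb :
  is_series a la -> is_series b lb -> is_series (fun n => a n - b n) (la - lb).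
Proof. intros. exact (is_series_minus a b la lb H H0). Qed.
Lemma is_series_scalR (a : nat -> R) k la :
  is_series a la -> is_series (fun n => k * a n) (k * la).
Proof. intros. exact (is_series_scal_l k a la H). Qed.

Definition GF (c : nat -> R) (q : C) (L : C) : Prop :=
  (forall n, 0 <= c n) /\
  is_series (fun n => c n * Re (Cpow q n)) (Re L) /\
  is_series (fun n => c n * Im (Cpow q n)) (Im L) /\
  ex_series (fun n => c n * Cmod q ^ n).

Lemma GF_ext c d q L : (forall n, c n = d n) -> GF c q L -> GF d q L.
Proof.
  intros H [H0 [H1 [H2 H3]]]. repeat split.
  - intros n; rewrite <- H; auto.
  - eapply is_series_ext; [|apply H1]. intros n; cbv beta; rewrite H; auto.
  - eapply is_series_ext; [|apply H2]. intros n; cbv beta; rewrite H; auto.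
  - eapply ex_series_ext; [|apply H3]. intros n; cbv beta; rewrite H; auto.
Qed.

Lemma GF_plus c d q A B : GF c q A -> GF d q B -> GF (fun n => c n + d n) q (A + B)%C.
Proof.
  intros [H0 [H1 [H2 H3]]] [G0 [G1 [G2 G3]]]. repeat split.
  - intros n; specialize (H0 n); specialize (G0 n); lra.
  - eapply is_series_ext; [|apply (is_series_plusR _ _ _ _ H1 G1)]. intros; simpl; ring.
  - eapply is_series_ext; [|apply (is_series_plusR _ _ _ _ H2 G2)]. intros; simpl; ring.
  - destruct H3 as [l1 H3]; destruct G3 as [l2 G3]. exists (l1 + l2).
    eapply is_series_ext; [|apply (is_series_plusR _ _ _ _ H3 G3)]. intros; simpl; ring.
Qed.

Lemma GF_scal k c q A : 0 <= k -> GF c q A -> GF (fun n => k * c n) q (RtoC k * A)%C.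
Proof.
  intros Hk [H0 [H1 [H2 H3]]]. repeat split.
  - intros n; specialize (H0 n); nra.
  - replace (Re (RtoC k * A)%C) with (k * Re A) by (destruct A; simpl; ring).
    eapply is_series_ext; [|apply (is_series_scalR _ k _ H1)]. intros; simpl; ring.
  - replace (Im (RtoC k * A)%C) with (k * Im A) by (destruct A; simpl; ring).
    eapply is_series_ext; [|apply (is_series_scalR _ k _ H2)]. intros; simpl; ring.
  - destruct H3 as [l1 H3]. exists (k * l1).
    eapply is_series_ext; [|apply (is_series_scalR _ k _ H3)]. intros; simpl; ring.
Qed.

Definition Rconv (c d : nat -> R) (n : nat) : R := sum_f_R0 (fun k => c k * d (n - k)%nat) n.

Lemma abs_re_bound c q n : 0 <= c -> Rabs (c * Re (Cpow q n)) <= c * Cmod q ^ n.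
Proof.
  intros H. rewrite Rabs_mult, (Rabs_right c) by lra. apply Rmult_le_compat_l; auto.
  rewrite <- Cmod_pow. apply re_le_Cmod.
Qed.
Lemma abs_im_bound c q n : 0 <= c -> Rabs (c * Im (Cpow q n)) <= c * Cmod q ^ n.
Proof.
  intros H. rewrite Rabs_mult, (Rabs_right c) by lra. apply Rmult_le_compat_l; auto.
  rewrite <- Cmod_pow. apply im_le_Cmod.
Qed.

Lemma ex_abs_re c q : (forall n, 0 <= c n) -> ex_series (fun n => c n * Cmod q ^ n) ->
  ex_series (fun n => Rabs (c n * Re (Cpow q n))).
Proof.
  intros H0 H. eapply (@ex_series_le R_AbsRing R_CompleteNormedModule); [|exact H]. intros n.
  change (Rabs (Rabs (c n * Re (Cpow q n))) <= c n * Cmod q ^ n).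
  rewrite Rabs_Rabsolu. apply abs_re_bound; auto.
Qed.

Lemma ex_abs_im c q : (forall n, 0 <= c n) -> ex_series (fun n => c n * Cmod q ^ n) ->
  ex_series (fun n => Rabs (c n * Im (Cpow q n))).
Proof.
  intros H0 H. eapply (@ex_series_le R_AbsRing R_CompleteNormedModule); [|exact H]. intros n.
  change (Rabs (Rabs (c n * Im (Cpow q n))) <= c n * Cmod q ^ n).
  rewrite Rabs_Rabsolu. apply abs_im_bound; auto.
Qed.

Lemma Re_mult (x y : C) : Re (x * y)%C = Re x * Re y - Im x * Im y.
Proof. destruct x, y; simpl; ring. Qed.
Lemma Im_mult (x y : C) : Im (x * y)%C = Re x * Im y + Im x * Re y.
Proof. destruct x, y; simpl; ring. Qed.

Lemma Cpow_split (q : C) n k : (k <= n)%nat -> Cpow q n = (Cpow q k * Cpow q (n - k))%C.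
Proof. intros H. rewrite <- Cpow_add_r. f_equal. lia. Qed.

Lemma GF_mult c d q A B : GF c q A -> GF d q B -> GF (Rconv c d) q (A * B)%C.
Proof.
  intros [H0 [H1 [H2 H3]]] [G0 [G1 [G2 G3]]].
  pose proof (is_series_mult _ _ _ _ H1 G1 (ex_abs_re c q H0 H3) (ex_abs_re d q G0 G3)) as S1.
  pose proof (is_series_mult _ _ _ _ H2 G2 (ex_abs_im c q H0 H3) (ex_abs_im d q G0 G3)) as S2.
  pose proof (is_series_mult _ _ _ _ H1 G2 (ex_abs_re c q H0 H3) (ex_abs_im d q G0 G3)) as S3.
  pose proof (is_series_mult _ _ _ _ H2 G1 (ex_abs_im c q H0 H3) (ex_abs_re d q G0 G3)) as S4.
  repeat split.
  - intros n. unfold Rconv. apply cond_pos_sum. intros k. apply Rmult_le_pos; auto.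
  - rewrite Re_mult. eapply is_series_ext; [|apply (is_series_minusR _ _ _ _ S1 S2)].
    intros n. cbv beta. rewrite <- minus_sum. unfold Rconv. rewrite Rmult_comm, scal_sum.
    apply sum_eq. intros k Hk. rewrite (Cpow_split q n k Hk), Re_mult. ring.
  - rewrite Im_mult. eapply is_series_ext; [|apply (is_series_plusR _ _ _ _ S3 S4)].
    intros n. cbv beta. rewrite <- plus_sum. unfold Rconv. rewrite Rmult_comm, scal_sum.
    apply sum_eq. intros k Hk. rewrite (Cpow_split q n k Hk), Im_mult. ring.
  - assert (Hr : 0 <= Cmod q) by apply Cmod_ge_0.
    pose proof (is_series_mult_pos _ _ _ _ (Series_correct _ H3) (Series_correct _ G3)
       (fun n => Rmult_le_pos _ _ (H0 n) (pow_le _ n Hr))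
       (fun n => Rmult_le_pos _ _ (G0 n) (pow_le _ n Hr))) as S.
    eexists. eapply is_series_ext; [|apply S].
    intros n. cbv beta. unfold Rconv. rewrite Rmult_comm, scal_sum.
    apply sum_eq. intros k Hk. assert (E : Cmod q ^ n = Cmod q ^ k * Cmod q ^ (n-k)) by (rewrite <- pow_add; f_equal; lia).
    rewrite E. ring.
Qed.



Definition Phi (u : nat -> R) (K : nat) : R :=
  match K with O => 0 | S K' => sum_n u K' end.

Lemma Phi_S u K : Phi u (S K) = Phi u K + u K.
Proof.
  destruct K; simpl.
  - rewrite sum_O. ring.
  - rewrite sum_Sn. reflexivity.
Qed.

Lemma spread_claim (E : nat -> nat) (w : nat -> R) : SM E -> forall N, exists K,
  sum_n (fun n => INR (ind E n) * w n) N = Phi (fun k => w (E k)) K /\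
  (forall k, (k < K)%nat <-> (E k <= N)%nat).
Proof.
  intros HE N. induction N as [|N IH].
  - rewrite sum_O. destruct (ind_spec E 0 HE) as [[-> [k Hk]]|[-> Hk]].
    + assert (k = 0)%nat by (pose proof (SM_ge E HE k); lia). subst k.
      exists 1%nat. split.
      * simpl. rewrite sum_O. rewrite Hk. simpl. ring.
      * intros k. split; intros H.
        -- assert (k = 0)%nat by lia. subst; lia.
        -- pose proof (SM_ge E HE k). lia.
    + exists 0%nat. split.
      * simpl. ring.
      * intros k. split; intros H; [lia|]. specialize (Hk k). lia.
  - destruct IH as [K [HS HK]]. rewrite sum_Sn. 
    destruct (ind_spec E (S N) HE) as [[-> [k Hk]]|[-> Hk]].
    + assert (k = K).
      { destruct (Nat.lt_trichotomy k K) as [h|[h|h]]; auto.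
        - apply HK in h. lia.
        - apply (SM_lt E HE) in h. assert (E K <= N)%nat by lia. apply HK in H. lia. }
      subst k. exists (S K). split.
      * rewrite Phi_S, <- HS, Hk. simpl. change (plus ?x ?y) with (x + y). ring.
      * intros k. split; intros H.
        -- destruct (Nat.eq_dec k K) as [->|Hne]; [lia|]. assert (k < K)%nat by lia. apply HK in H0. lia.
        -- destruct (Nat.eq_dec (E k) (S N)) as [Heq|Hne].
           ++ rewrite <- Hk in Heq. apply (SM_inj E HE) in Heq. lia.
           ++ assert (E k <= N)%nat by lia. apply HK in H0. lia.
    + exists K. split.
      * rewrite <- HS. simpl. change (plus ?x ?y) with (x + y). ring.
      * intros k. rewrite HK. specialize (Hk k). lia.
Qed.

Lemma spread_real (E : nat -> nat) (w : nat -> R) l : SM E ->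
  is_series (fun k => w (E k)) l -> is_series (fun n => INR (ind E n) * w n) l.
Proof.
  intros HE Hs. unfold is_series in *. apply filterlim_locally. intros eps.
  pose proof (proj1 (filterlim_locally _ _) Hs eps) as Hs'. destruct Hs' as [K0 HK0].
  exists (E K0). intros N HN. destruct (spread_claim E w HE N) as [K [HS HK]].
  match goal with |- ball _ _ ?X => replace X with (Phi (fun k => w (E k)) K) by (symmetry; exact HS) end. assert (K0 < K)%nat by (apply HK; lia).
  destruct K as [|K']; [lia|]. simpl. apply HK0. lia.
Qed.

Lemma pow_le_decr r i j : 0 <= r <= 1 -> (i <= j)%nat -> r ^ j <= r ^ i.
Proof.
  intros Hr Hij. replace j with (i + (j - i))%nat by lia. rewrite pow_add.
  pose proof (pow_le r i (proj1 Hr)). 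
  assert (r ^ (j - i) <= 1).
  { induction (j - i)%nat as [|m IH]; simpl; [lra|]. pose proof (pow_le r m (proj1 Hr)). nra. }
  nra.
Qed.

Lemma ex_geom r : 0 <= r < 1 -> ex_series (fun n => r ^ n).
Proof. intros H. exists (/ (1 - r)). apply is_series_geom. rewrite Rabs_right; lra. Qed.

Lemma GF_spread E q : SM E -> Cmod q < 1 ->
  GF (fun n => INR (ind E n)) q (CSeries (fun k => Cpow q (E k))).
Proof.
  intros HE Hq. assert (Hr : 0 <= Cmod q) by apply Cmod_ge_0.
  assert (Bd : forall k, Cmod q ^ (E k) <= Cmod q ^ k)
    by (intros k; apply pow_le_decr; [lra| apply SM_ge; auto]).
  repeat split.
  - intros n; apply pos_INR.
  - apply spread_real; auto. simpl. apply Series_correct.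
    eapply (@ex_series_le R_AbsRing R_CompleteNormedModule); [|apply (ex_geom (Cmod q)); lra].
    intros k. change (Rabs (Re (Cpow q (E k))) <= Cmod q ^ k).
    eapply Rle_trans; [apply re_le_Cmod|]. rewrite Cmod_pow. apply Bd.
  - apply spread_real; auto. simpl. apply Series_correct.
    eapply (@ex_series_le R_AbsRing R_CompleteNormedModule); [|apply (ex_geom (Cmod q)); lra].
    intros k. change (Rabs (Im (Cpow q (E k))) <= Cmod q ^ k).
    eapply Rle_trans; [apply im_le_Cmod|]. rewrite Cmod_pow. apply Bd.
  - eexists. apply spread_real; auto. apply Series_correct.
    eapply (@ex_series_le R_AbsRing R_CompleteNormedModule); [|apply (ex_geom (Cmod q)); lra].
    intros k. change (Rabs (Cmod q ^ (E k)) <= Cmod q ^ k).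
    rewrite Rabs_right by (apply Rle_ge, pow_le; auto). apply Bd.
Qed.

Lemma sum_n_C (u : nat -> C) n :
  sum_n u n = (sum_n (fun k => Re (u k)) n, sum_n (fun k => Im (u k)) n).
Proof.
  induction n as [|n IH].
  - rewrite !sum_O. destruct (u 0%nat); reflexivity.
  - rewrite !sum_Sn. rewrite IH. destruct (u (S n)). reflexivity.
Qed.

Lemma C_series (u : nat -> C) L :
  is_series (fun n => Re (u n)) (Re L) -> is_series (fun n => Im (u n)) (Im L) -> is_series u L.
Proof.
  intros H1 H2. unfold is_series in *. apply filterlim_locally. intros eps.
  destruct (proj1 (filterlim_locally _ _) H1 eps) as [N1 HN1].
  destruct (proj1 (filterlim_locally _ _) H2 eps) as [N2 HN2].
  exists (max N1 N2). intros n Hn.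
  match goal with |- ball _ _ ?X => replace X with (sum_n (fun k => Re (u k)) n, sum_n (fun k => Im (u k)) n)
    by (symmetry; apply sum_n_C) end.
  destruct L as [L1 L2]. split; [apply HN1|apply HN2]; lia.
Qed.

Lemma GF_final c q L : GF c q L -> is_series (fun n => (RtoC (c n) * Cpow q n)%C) L.
Proof.
  intros [H0 [H1 [H2 H3]]]. apply C_series.
  - eapply is_series_ext; [|apply H1]. intros n. cbv beta. rewrite Re_mult. simpl. ring.
  - eapply is_series_ext; [|apply H2]. intros n. cbv beta. rewrite Im_mult. simpl. ring.
Qed.



Lemma INR_sumk f k : INR (sumk f k) = sum_f_R0 (fun i => INR (f i)) k.
Proof. induction k as [|k IH]; simpl sumk; [reflexivity|]. rewrite plus_INR, IH. reflexivity. Qed.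

Lemma INR_natconv c d n : INR (natconv c d n) = Rconv (fun i => INR (c i)) (fun i => INR (d i)) n.
Proof.
  unfold natconv, Rconv. rewrite INR_sumk. apply sum_eq. intros i _. apply mult_INR.
Qed.

Lemma Rconv_ext c c' d d' n : (forall i, c i = c' i) -> (forall i, d i = d' i) ->
  Rconv c d n = Rconv c' d' n.
Proof. intros H1 H2. unfold Rconv. apply sum_eq. intros i _. rewrite H1, H2. reflexivity. Qed.

Lemma CSeries_ext u v : (forall k, u k = v k) -> CSeries u = CSeries v.
Proof. intros H. unfold CSeries. f_equal; apply Series_ext; intros; rewrite H; reflexivity. Qed.

Lemma GF_phi m q : (0 < m)%nat -> Cmod q < 1 ->
  GF (fun n => INR (ind (Esq m) n) + INR (ind (Esq1 m) n)) q (ramanujan_phi (Cpow q m)).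
Proof.
  intros Hm Hq. unfold ramanujan_phi. apply GF_plus.
  - rewrite (CSeries_ext _ (fun k => Cpow q (Esq m k))) by (intros; unfold Esq; symmetry; apply Cpow_mult_r).
    apply GF_spread; auto. apply SM_Esq; auto.
  - rewrite (CSeries_ext _ (fun k => Cpow q (Esq1 m k))) by (intros; unfold Esq1; symmetry; apply Cpow_mult_r).
    apply GF_spread; auto. apply SM_Esq1; auto.
Qed.

Lemma GF_psi2 m q : (0 < m)%nat -> Cmod q < 1 ->
  GF (fun n => INR (ind (Etr m) n) + INR (ind (Etr m) n)) q
     (ramanujan_psi (Cpow q m) + ramanujan_psi (Cpow q m))%C.
Proof.
  intros Hm Hq. unfold ramanujan_psi.
  rewrite (CSeries_ext _ (fun k => Cpow q (Etr m k))) by (intros; unfold Etr; symmetry; apply Cpow_mult_r).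
  apply GF_plus; apply GF_spread; auto; apply SM_Etr; auto.
Qed.

Lemma series_main (k1 k2 b : nat) (q : C) (f : nat -> nat) :
  (0 < k1)%nat -> (0 < k2)%nat -> (0 < b)%nat -> Cmod q < 1 ->
  (forall n m, is_count (QP k1 k2 b n) m -> f n = (2 * m)%nat) ->
  is_series (fun n => (RtoC (INR (f n)) * Cpow q n)%C)
    (8 * ramanujan_phi (Cpow q k1) * ramanujan_psi (Cpow q k2) * ramanujan_psi (Cpow q b))%C.
Proof.
  intros H1 H2 H3 Hq Hf.
  pose proof (GF_scal 2 _ _ _ ltac:(lra) (GF_mult _ _ _ _ _ (GF_mult _ _ _ _ _ (GF_phi k1 q H1 Hq) (GF_psi2 k2 q H2 Hq))
     (GF_psi2 b q H3 Hq))) as G.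
  replace (8 * ramanujan_phi (Cpow q k1) * ramanujan_psi (Cpow q k2) * ramanujan_psi (Cpow q b))%C
    with (RtoC 2 * (ramanujan_phi (Cpow q k1) * (ramanujan_psi (Cpow q k2) + ramanujan_psi (Cpow q k2)) *
          (ramanujan_psi (Cpow q b) + ramanujan_psi (Cpow q b))))%C by ring.
  apply GF_final. eapply GF_ext; [|exact G].
  intros n. cbv beta. rewrite (Hf n _ (count_QP k1 k2 b n H1 H2 H3)).
  rewrite mult_INR, INR_natconv. f_equal.
  apply Rconv_ext; [|intros i; rewrite plus_INR; reflexivity].
  intros i. rewrite INR_natconv. apply Rconv_ext; intros j; rewrite plus_INR; reflexivity.
Qed.



Theorem lemma4p1 (a b : nat) (ha : (0 < a)%nat) (hb : (0 < b)%nat)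
  (hodd : Nat.odd a = true) :
  (forall n : nat, (0 < n)%nat ->
     t a (3 * a) (4 * b) (4 * n + 6 * a) = (2 * t a (12 * a) b n)%nat /\
     t a (3 * a) (4 * b) (4 * n + 3 * a) = (2 * t (3 * a) (4 * a) b n)%nat) /\
  (forall q : C, (Cmod q < 1)%R ->
     is_series (fun n => (RtoC (INR (t a (3 * a) (4 * b) (4 * n))) * Cpow q n)%C)
       (8 * ramanujan_phi (Cpow q (6 * a)) * ramanujan_psi (Cpow q a)
          * ramanujan_psi (Cpow q b))%C /\
     is_series (fun n => (RtoC (INR (t a (3 * a) (4 * b) (4 * n + a))) * Cpow q n)%C)
       (8 * ramanujan_phi (Cpow q (2 * a)) * ramanujan_psi (Cpow q (3 * a))
          * ramanujan_psi (Cpow q b))%C).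
Proof.
  split.
  - intros n _. split; [apply caseC|apply caseD]; auto.
  - intros q Hq. split.
    + apply (series_main (6*a) a b q (fun n => t a (3 * a) (4 * b) (4 * n))); auto; try lia.
      intros n m Hm. apply caseA; auto.
    + apply (series_main (2*a) (3*a) b q (fun n => t a (3 * a) (4 * b) (4 * n + a))); auto; try lia.
      intros n m Hm. apply caseB; auto.
Qed.
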